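(* Let $s,t,r$ be nonnegative integers with $s>t$. Then \[ \sum_{D \in \mathcal{D}_{s,t}^{(r)}} q^{\mathrm{vmr}(D)} = q^{\binom{r+1}{2}}\begin{bmatrix}s+t\\ s+r\end{bmatrix}_q. \]
   Context: A ballot path from $(0,0)$ to $(s+t,s-t)$ is a sequence of lattice points $v_0=(0,0),v_1,\ldots,v_{s+t}=(s+t,s-t)$ with each step $v_i-v_{i-1}\in\{(1,1),(1,-1)\}$ that never goes below the $x$-axis. A point $v_i$ ($0<i<s+t$) is a valley if $v_i-v_{i-1}=(1,-1)$ and $v_{i+1}-v_i=(1,1)$; a valley lying on the $x$-axis is a return. Each return may independently be marked or not; a marked ballot path is a ballot path together with a choice of which of its returns are marked. $\mathcal{D}_{s,t}^{(r)}$ is the set of marked ballot paths from $(0,0)$ to $(s+t,s-t)$ with at least $r$ marked returns. For such $D$, $\mathrm{maj}(D)$ is the sum of the $x$-coordinates of all valleys of $D$, and $\mathrm{vmr}(D)=\mathrm{maj}(D)-\frac12\sum x_i$, where the last sum runs over the $x$-coordinates $x_i$ of the marked returns of $D$. Notation: $(a;q)_n=(1-a)\cdots(1-aq^{n-1})$ and $\begin{bmatrix}n\\k\end{bmatrix}_q=\frac{(q;q)_n}{(q;q)_k(q;q)_{n-k}}$ for $n\ge k\ge0$, $0$ otherwise. *)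

(* Defs.v *)
From mathcomp Require Import all_boot all_order all_algebra fraction.
Set Implicit Arguments. Unset Strict Implicit. Unset Printing Implicit Defensive.
Import Order.TTheory GRing.Theory Num.Theory.
Local Open Scope ring_scope.

Definition qpoch (F : fieldType) (a q : F) (n : nat) : F :=
  \prod_(i < n) (1 - a * q ^+ i).

Definition qbinom (F : fieldType) (q : F) (n k : nat) : F :=
  if (k <= n)%N then qpoch q q n / (qpoch q q k * qpoch q q (n - k)) else 0.

Definition qvar : {fraction {poly rat}} := tofrac ('X : {poly rat}).

(* A lattice path of length n is encoded by its step sequence: true = (1,1),
   false = (1,-1). Step number j (1-indexed) is nth false p (j-1).
   height p i = y-coordinate of v_i. *)
Definition height (p : seq bool) (i : nat) : int :=
  \sum_(j < i) (if nth false p j then 1 else -1).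

Definition is_ballot (s t : nat) (p : seq bool) : bool :=
  (size p == s + t)%N &&
  [forall i : 'I_(size p).+1, 0 <= height p i] &&
  (height p (size p) == s%:Z - t%:Z).

Definition is_valley (p : seq bool) (i : nat) : bool :=
  [&& (0 < i)%N, (i < size p)%N, ~~ nth false p i.-1 & nth false p i].

Definition is_return (p : seq bool) (i : nat) : bool :=
  is_valley p i && (height p i == 0).

Definition maj (p : seq bool) : nat :=
  \sum_(0 <= i < size p | is_valley p i) i.

Definition in_Dr (s t r : nat) (D : (s + t).-tuple bool * {set 'I_(s + t)}) : bool :=
  [&& is_ballot s t D.1,
      [forall i in D.2, is_return D.1 (nat_of_ord i)] &
      (r <= #|D.2|)%N].

(* Returns lie on
   the x-axis, hence have even x-coordinate, so each x_i/2 is an exact nat,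
   and vmr(D) >= 0 since every marked return is a valley counted in maj. *)
Definition vmr (s t : nat) (D : (s + t).-tuple bool * {set 'I_(s + t)}) : nat :=
  (maj D.1 - \sum_(i in D.2) (nat_of_ord i)./2)%N.

(* Main.v *)
Require Import Defs.
From mathcomp Require Import all_boot all_order all_algebra fraction.
From mathcomp Require Import ring zify.
Import GRing.Theory.
Local Open Scope ring_scope.

Section QB.
Variable F : fieldType.
Variable q : F.
Hypothesis hq : forall i : nat, (0 < i)%N -> q ^+ i != 1.

Local Notation P := (qpoch q q).

Lemma P0 : P 0 = 1. Proof. by rewrite /qpoch big_ord0. Qed.
Lemma PS k : P k.+1 = P k * (1 - q ^+ k.+1).
Proof. by rewrite /qpoch big_ord_recr /= exprS. Qed.
Lemma fac_neq0 k : 1 - q ^+ k.+1 != 0.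
Proof. by rewrite subr_eq0 eq_sym hq. Qed.
Lemma P_neq0 k : P k != 0.
Proof. elim: k => [|k IH]; first by rewrite P0 oner_eq0.
by rewrite PS mulf_neq0 // fac_neq0. Qed.

Local Notation B := (qbinom q).

Lemma B_gt n k : (n < k)%N -> B n k = 0.
Proof. by move=> h; rewrite /qbinom leqNgt h. Qed.
Lemma Bnn n : B n n = 1.
Proof. by rewrite /qbinom leqnn subnn P0 mulr1 divff // P_neq0. Qed.
Lemma Bn0 n : B n 0 = 1.
Proof. by rewrite /qbinom leq0n subn0 P0 mul1r divff // P_neq0. Qed.
Lemma B0k k : B 0 k = (k == 0)%:R.
Proof. by case: k => [|k]; rewrite ?Bn0 // B_gt. Qed.

Lemma Bform k d : B (k + d) k = P (k + d) / (P k * P d).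
Proof. by rewrite /qbinom leq_addr addKn. Qed.

Lemma pascal1 n k : B n.+1 k.+1 = B n k + q ^+ k.+1 * B n k.+1.
Proof.
case: (ltngtP k n) => [lt|gt|->].
- move/subnKC: lt => <-; move: (n - k.+1)%N => d.
  have e1 : B (k.+1 + d).+1 k.+1 = P (k + d).+2 / (P k.+1 * P d.+1).
    by rewrite -addnS Bform addSn addnS.
  have e2 : B (k.+1 + d) k = P (k + d).+1 / (P k * P d.+1).
    by rewrite addSnnS Bform addnS.
  have e3 : B (k.+1 + d) k.+1 = P (k + d).+1 / (P k.+1 * P d).
    by rewrite Bform addSn.
  rewrite e1 e2 e3 !PS.
  have := P_neq0 k; have := P_neq0 d; have := P_neq0 (k + d).
  have := fac_neq0 (k + d).+1; have := fac_neq0 k; have := fac_neq0 d.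
  move=> h1 h2 h3 h4 h5 h6.
  have ex : q ^+ (k + d).+2 = q ^+ k.+1 * q ^+ d.+1 by rewrite -exprD addSn addnS.
  rewrite ex. field.
  by rewrite h1 h2 h5 h6.
- by rewrite !B_gt ?mulr0 ?addr0 // ltnW.
- by rewrite !Bnn (@B_gt n n.+1 (ltnSn n)) mulr0 addr0.
Qed.

Lemma pascal2 n k : (k <= n)%N -> B n.+1 k.+1 = q ^+ (n - k) * B n k + B n k.+1.
Proof.
rewrite leq_eqVlt => /orP [/eqP ->|lt].
  by rewrite !Bnn subnn expr0 mul1r B_gt ?addr0.
move/subnKC: lt => <-; move: (n - k.+1)%N => d.
have e1 : B (k.+1 + d).+1 k.+1 = P (k + d).+2 / (P k.+1 * P d.+1).
  by rewrite -addnS Bform addSn addnS.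
have e2 : B (k.+1 + d) k = P (k + d).+1 / (P k * P d.+1).
  by rewrite addSnnS Bform addnS.
have e3 : B (k.+1 + d) k.+1 = P (k + d).+1 / (P k.+1 * P d).
  by rewrite Bform addSn.
have -> : (k.+1 + d - k = d.+1)%N by rewrite addSnnS addKn.
rewrite e1 e2 e3 !PS.
have := P_neq0 k; have := P_neq0 d; have := P_neq0 (k + d).
have := fac_neq0 (k + d).+1; have := fac_neq0 k; have := fac_neq0 d.
move=> h1 h2 h3 h4 h5 h6.
have ex : q ^+ (k + d).+2 = q ^+ k.+1 * q ^+ d.+1 by rewrite -exprD addSn addnS.
rewrite ex. field.
by rewrite h1 h2 h5 h6.
Qed.

Lemma ratio M j : (1 - q ^+ j.+1) * B M.+1 j.+1 = (1 - q ^+ M.+1) * B M j.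
Proof.
case: (leqP j M) => [le|gt]; last by rewrite !B_gt ?mulr0.
move/subnKC: le => <-; move: (M - j)%N => d.
rewrite -addSn !Bform !PS addSn.
have := P_neq0 j; have := P_neq0 d; have := P_neq0 (j + d).
have := fac_neq0 j; move=> h1 h2 h3 h4.
field. by rewrite ?h1 ?h2 ?h3 ?h4.
Qed.

Lemma I1 M j : B M.+2 j.+1 = B M.+1 j.+1 + B M.+1 j + (q ^+ M.+1 - 1) * B M j.
Proof.
rewrite pascal1; have h := ratio M j.
apply/eqP; rewrite -subr_eq0; apply/eqP.
transitivity ((1 - q ^+ M.+1) * B M j - (1 - q ^+ j.+1) * B M.+1 j.+1); first by ring.
by rewrite h subrr.
Qed.

Lemma Bsym n k : (k <= n)%N -> B n (n - k) = B n k.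
Proof.
move/subnKC => <-; move: (n - k)%N => d.
rewrite addKn Bform [(k + d)%N]addnC Bform; congr (_ / _); exact: mulrC.
Qed.

Lemma stepB i : q ^+ i.+1 * B i.*2.+1 i.+1 = B i.*2.+2 i.+1 - B i.*2.+1 i.+1.
Proof.
rewrite (@pascal2 i.*2.+1 i); last by lia.
have -> : (i.*2.+1 - i = i.+1)%N by lia.
have -> : B i.*2.+1 i = B i.*2.+1 i.+1.
  have e : (i.*2.+1 - i = i.+1)%N by lia.
  by rewrite -(@Bsym i.*2.+1 i) ?e //; lia.
by rewrite addrK.
Qed.

Lemma stepC i r : q ^+ i.+1 * B i.*2.+1 (i.+1 + r) =
   q ^+ r.+1 * (B i.*2.+2 (i.+1 + r.+1) - B i.*2.+1 (i.+1 + r.+1)).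
Proof.
case: (leqP r i) => [le|gt].
  rewrite addnS (@pascal2 i.*2.+1 (i.+1 + r)); last by lia.
  rewrite addrK mulrA -exprD; congr (_ ^+ _ * _); lia.
rewrite !B_gt ?subrr ?mulr0 //; lia.
Qed.

Fixpoint Arec (n : nat) : nat -> bool -> nat -> F :=
  match n with
  | 0 => fun h l r => if [&& h == 0, l & r == 0]%N then 1 else 0
  | n'.+1 => fun h l r =>
      if l then
        match h with
        | 0 => 0
        | h'.+1 => Arec n' h' true r + q ^+ n' * Arec n' h' false r +
                   (if h' == 0 then q ^+ (n' - n'./2) * Arec n' 0 false r.-1 else 0)
        end
      else Arec n' h.+1 true r + Arec n' h.+1 false r
  end.

Definition Wc n h r : F :=
  if odd (n + h) then 0 else
  q ^+ 'C(r.+1, 2) * B (if h == 0 then n.-1 else n) ((n + h)./2 + r).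
Definition WD n h r : F := if n is n'.+1 then Wc n' h.+1 r else 0.
Definition WU n h r : F := Wc n h r - WD n h r.

Lemma Wc_ev n h r m : (n + h = m.*2)%N ->
  Wc n h r = q ^+ 'C(r.+1, 2) * B (if h == 0 then n.-1 else n) (m + r).
Proof. by move=> e; rewrite /Wc e odd_double doubleK. Qed.
Lemma Wc_od n h r m : (n + h = m.*2.+1)%N -> Wc n h r = 0.
Proof. by move=> e; rewrite /Wc e /= odd_double. Qed.
Lemma par n : exists m, (n = m.*2 \/ n = m.*2.+1)%N.
Proof.
exists n./2; move: (odd_double_half n).
by case: (odd n) => /= e; [right|left]; rewrite -{1}e ?add1n ?add0n.
Qed.

Lemma Arec_closed n : forall h r, Arec n h false r = WD n h r /\ Arec n h true r = WU n h r.
Proof.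
elim: n => [|n IH] h r.
  split; first by rewrite /= andbF.
  rewrite /WU /WD subr0 /Wc /=.
  case: h => [|h] /=.
    by rewrite B0k; case: r => [|r] /=; rewrite ?mulr1 ?mulr0 ?expr0.
  case: ifP => // hodd; case: h hodd => [|h] //= _.
  by rewrite B0k addSn mulr0.
split.
  by rewrite /= !(proj1 (IH _ _)) !(proj2 (IH _ _)) /WU subrK.
case: h => [|h] /=.
  rewrite /WU /WD /Wc /= addn0 addn1 /=.
  by rewrite subrr.
rewrite !(proj1 (IH _ _)) !(proj2 (IH _ _)) /WU.
case: n IH => [|n] _.
  rewrite /WD !subr0 mulr0 addr0 /Wc /= !negbK add0n !if_same addr0.
  case: ifP => _; first by rewrite subr0.
  by rewrite addSn pascal1 (@B_gt 0 _ (ltn0Sn _)) !mulr0 !addr0 subr0.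
rewrite {1 2 4}/WD.
case: h => [|h].
  rewrite /WD; have [m [en|en]] := par n.
    rewrite (@Wc_od n.+1 0 r m) ?(@Wc_od n 1 r m) ?(@Wc_od n 1 r.-1 m)
      ?(@Wc_od n.+2 1 r m.+1) ?(@Wc_od n.+1 2 r m.+1); try lia.
    by rewrite /= !mulr0 !subr0 !addr0.
  rewrite (@Wc_ev n.+1 0 r m.+1) ?(@Wc_ev n 1 _ m.+1) ?(@Wc_ev n.+2 1 _ m.+2)
     ?(@Wc_ev n.+1 2 _ m.+2); try lia.
  have hh : (n.+1 - n.+1./2 = m.+1)%N.
    by rewrite (_ : n.+1 = (m.+1).*2) ?doubleK; lia.
  rewrite hh /=; subst n.
  rewrite (addSn m.+1 r) I1.
  case: r => [|r].
    rewrite !addn0 /= expr0 !mul1r stepB; ring.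
  rewrite /= [q ^+ m.+1 * _]mulrCA -addnS stepC.
  rewrite binS bin1 exprD; ring.
rewrite (_ : (h.+1 == 0) = false) // addr0.
have [m [en|en]] := par (n + h).
  rewrite (@Wc_ev n.+1 h.+1 r m.+1) ?(@Wc_ev n h.+2 _ m.+1) ?(@Wc_ev n.+2 h.+2 _ m.+2)
     ?(@Wc_ev n.+1 h.+3 _ m.+2); try lia.
  rewrite (addSn m.+1 r) I1 /=; ring.
rewrite (@Wc_od n.+1 h.+1 r m.+1) ?(@Wc_od n h.+2 r m.+1)
  ?(@Wc_od n.+2 h.+2 r m.+2) ?(@Wc_od n.+1 h.+3 r m.+2); try lia.
by rewrite !mulr0 !subr0 !addr0.
Qed.
End QB.

Lemma height_rcons p b i : (i <= size p)%N -> height (rcons p b) i = height p i.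
Proof.
move=> hi; rewrite /height; apply: eq_bigr => j _.
by rewrite nth_rcons (leq_trans (ltn_ord j) hi).
Qed.

Lemma heightS p i : height p i.+1 = height p i + (if nth false p i then 1 else -1).
Proof. by rewrite /height big_ord_recr. Qed.

Lemma valley_rcons p b i : (i < size p)%N -> is_valley (rcons p b) i = is_valley p i.
Proof.
move=> hi; rewrite /is_valley size_rcons !nth_rcons hi (leq_ltn_trans (leq_pred i) hi).
by rewrite ltnS (ltnW hi).
Qed.

Lemma valley_last p b : is_valley (rcons p b) (size p) = ~~ last true p && b.
Proof.
case/lastP: p => [|p x]; first by [].
rewrite /is_valley !size_rcons /= ltnSn last_rcons.
rewrite !nth_rcons !size_rcons ltnSn ltnn eqxx /= ltnn eqxx.
by [].
Qed.

Lemma return_rcons p b i : (i < size p)%N -> is_return (rcons p b) i = is_return p i.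
Proof. by move=> hi; rewrite /is_return valley_rcons // height_rcons // ltnW. Qed.

Lemma return_last p b : is_return (rcons p b) (size p) =
   [&& ~~ last true p, b & height p (size p) == 0].
Proof. by rewrite /is_return valley_last height_rcons // andbA. Qed.

Lemma iota0S n : iota 0 n.+1 = rcons (iota 0 n) n.
Proof. by rewrite -addn1 iotaD cats1. Qed.

Section Seqs.
Implicit Types w : seq (bool * bool).
Definition st w := map fst w.
Definition hgt w : int := height (st w) (size w).
Definition lastu w := last true (st w).
Definition marks w := map snd w.
Definition cnt w := count snd w.
Definition valid w :=
  all (fun i => 0 <= height (st w) i) (iota 0 (size w).+1) &&
  all (fun i => nth false (marks w) i ==> is_return (st w) i) (iota 0 (size w)).
Definition ee w := (\sum_(0 <= i < size w | is_valley (st w) i)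
   (if nth false (marks w) i then i - i./2 else i))%N.

Lemma st_rcons w x : st (rcons w x) = rcons (st w) x.1.
Proof. by rewrite /st map_rcons. Qed.
Lemma size_st w : size (st w) = size w.
Proof. by rewrite size_map. Qed.

Lemma hgt_rcons w x : hgt (rcons w x) = hgt w + (if x.1 then 1 else -1).
Proof.
rewrite /hgt st_rcons size_rcons heightS nth_rcons size_st ltnn eqxx.
by rewrite height_rcons // size_st.
Qed.

Lemma lastu_rcons w x : lastu (rcons w x) = x.1.
Proof. by rewrite /lastu st_rcons last_rcons. Qed.

Lemma cnt_rcons w x : cnt (rcons w x) = (cnt w + x.2)%N.
Proof. by rewrite /cnt -cats1 count_cat /= addn0. Qed.

Lemma snd_rcons w x i : (i < size w)%N ->
  nth false (marks (rcons w x)) i = nth false (marks w) i.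
Proof. by move=> hi; rewrite /marks map_rcons nth_rcons size_map hi. Qed.

Lemma valid_rcons w x : valid (rcons w x) =
  [&& valid w, 0 <= hgt (rcons w x) &
      x.2 ==> [&& ~~ lastu w, x.1 & hgt w == 0]].
Proof.
rewrite /valid size_rcons.
have -> : all (fun i => 0 <= height (st (rcons w x)) i) (iota 0 (size w).+2) =
   all (fun i => 0 <= height (st w) i) (iota 0 (size w).+1) && (0 <= hgt (rcons w x)).
  rewrite (iota0S (size w).+1) all_rcons andbC; congr andb.
  apply: eq_in_all => i; rewrite mem_iota add0n => /andP [_ hi].
  by rewrite st_rcons height_rcons // size_st -ltnS.
  by rewrite /hgt size_rcons.
have -> : all (fun i => nth false (marks (rcons w x)) i ==> is_return (st (rcons w x)) i)
      (iota 0 (size w).+1) =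
   all (fun i => nth false (marks w) i ==> is_return (st w) i) (iota 0 (size w)) &&
   (x.2 ==> [&& ~~ lastu w, x.1 & hgt w == 0]).
  rewrite (iota0S (size w)) all_rcons andbC; congr andb.
    apply: eq_in_all => i; rewrite mem_iota add0n => /andP [_ hi].
    by rewrite snd_rcons // st_rcons return_rcons // size_st.
  rewrite /marks map_rcons nth_rcons size_map ltnn eqxx st_rcons.
  by rewrite -(size_st w) return_last size_st.
set a := all _ (iota 0 (size w).+1); set b := all _ (iota 0 (size w)).
by case: a; case: b; case: (0 <= _); case: (_ ==> _).
Qed.

Lemma ee_rcons w x : ee (rcons w x) = (ee w +
  (if ~~ lastu w && x.1 then (if x.2 then size w - (size w)./2 else size w) else 0))%N.
Proof.
rewrite /ee size_rcons big_mkcond big_nat_recr //= [in RHS]big_mkcond.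
congr (_ + _)%N.
  apply: eq_big_nat => i /andP [_ hi].
  by rewrite st_rcons valley_rcons ?size_st // snd_rcons.
rewrite st_rcons -(size_st w) valley_last size_st /lastu.
by rewrite /marks map_rcons nth_rcons size_map ltnn eqxx.
Qed.

Lemma valid_hgt w : valid w -> 0 <= hgt w.
Proof.
case/andP => /allP h _; apply: h; by rewrite mem_iota add0n ltnSn.
Qed.

End Seqs.

Section G.
Variable F : fieldType.
Variable q : F.

Lemma sum_rcons (T : finType) n (Fn : seq T -> F) :
  \sum_(t : n.+1.-tuple T) Fn t = \sum_(w : n.-tuple T) \sum_(x : T) Fn (rcons w x).
Proof.
rewrite pair_bigA /= (reindex (fun p : n.-tuple T * T => [tuple of rcons p.1 p.2])) //=.
exists (fun t : n.+1.-tuple T =>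
          ([tuple of belast (thead t) (behead t)], last (thead t) (behead t))).
  move=> [w x] _ /=.
  have e : rcons w x = rcons (belast (thead [tuple of rcons w x]) (behead [tuple of rcons w x]))
                             (last (thead [tuple of rcons w x]) (behead [tuple of rcons w x])).
    by rewrite -lastI; exact: (congr1 val (tuple_eta [tuple of rcons w x])).
  case/rcons_inj: e => e1 e2; congr (_, _) => //; exact: val_inj.
move=> t _; apply: val_inj => /=; rewrite -lastI.
exact: (esym (congr1 val (tuple_eta t))).
Qed.

Lemma sum_pairbool (Fn : bool * bool -> F) :
  \sum_(x : bool * bool) Fn x = Fn (true, true) + Fn (true, false) + Fn (false, true) + Fn (false, false).
Proof.
rewrite (eq_bigr (fun p => Fn (p.1, p.2))); last by case.
rewrite -(pair_bigA _ (fun a b => Fn (a, b))) /= big_bool /= !big_bool /=.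
by rewrite addrA.
Qed.

Definition G n h l r := \sum_(w : n.-tuple (bool * bool) |
   [&& valid w, hgt w == h%:Z, lastu w == l & (r <= cnt w)%N]) q ^+ ee w.


Lemma G_false n h r : G n.+1 h false r = G n h.+1 true r + G n h.+1 false r.
Proof.
rewrite /G big_mkcond (@sum_rcons _ n (fun s => if [&& valid s, hgt s == h%:Z, lastu s == false & (r <= cnt s)%N] then q ^+ ee s else 0)) [X in _ = X + _]big_mkcond [X in _ = _ + X]big_mkcond -big_split.
apply: eq_bigr => w _; rewrite sum_pairbool.
rewrite !valid_rcons !hgt_rcons !lastu_rcons !cnt_rcons !ee_rcons /=.
move: (@valid_hgt w); move: (valid w) (hgt w) (lastu w) (cnt w) (ee w) => V H L C E hv.
case: V hv => [hv|_]; case: L => /=; rewrite ?andbF ?addr0 ?add0r ?addn0.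
all: repeat case: ifP => ?.
all: rewrite ?addr0 ?add0r //.
all: try (exfalso; have := hv isT; lia).
Qed.

Lemma G_true0 n r : G n.+1 0 true r = 0.
Proof.
rewrite /G big_mkcond (@sum_rcons _ n (fun s => if [&& valid s, hgt s == 0%:Z, lastu s == true & (r <= cnt s)%N] then q ^+ ee s else 0)).
apply: big1 => w _; rewrite sum_pairbool.
rewrite !valid_rcons !hgt_rcons !lastu_rcons !cnt_rcons !ee_rcons /=.
move: (@valid_hgt w); move: (valid w) (hgt w) (lastu w) (cnt w) (ee w) => V H L C E hv.
case: V hv => [hv|_]; case: L => /=; rewrite ?andbF ?addr0 ?add0r ?addn0.
all: repeat case: ifP => ?.
all: rewrite ?addr0 ?add0r //.
all: try (exfalso; have := hv isT; lia).
Qed.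

Lemma G_trueS n h r : G n.+1 h.+1 true r = G n h true r + q ^+ n * G n h false r +
   (if h == 0%N then q ^+ (n - n./2) * G n 0 false r.-1 else 0).
Proof.
rewrite /G big_mkcond (@sum_rcons _ n (fun s => if [&& valid s, hgt s == h.+1%:Z, lastu s == true & (r <= cnt s)%N] then q ^+ ee s else 0)).
rewrite [X in _ = X + _ + _]big_mkcond [X in _ = _ + _ * X + _]big_mkcond mulr_sumr.
case: (h =P 0%N) => [->|hn].
  rewrite [X in _ = _ + _ * X]big_mkcond mulr_sumr -!big_split.
  apply: eq_bigr => w _; rewrite sum_pairbool.
  rewrite !valid_rcons !hgt_rcons !lastu_rcons !cnt_rcons !ee_rcons /= size_tuple.
  move: (@valid_hgt w); move: (valid w) (hgt w) (lastu w) (cnt w) (ee w) => V H L C E hv.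
  case: V hv => [hv|_]; case: L => /=; rewrite ?andbF ?addr0 ?add0r ?addn0.
  all: repeat case: ifP => ?.
  all: rewrite ?addr0 ?add0r ?mulr0 ?exprD //.
  all: try (exfalso; have := hv isT; lia).
  all: try ring.
rewrite ?addr0 -big_split.
apply: eq_bigr => w _; rewrite sum_pairbool.
rewrite !valid_rcons !hgt_rcons !lastu_rcons !cnt_rcons !ee_rcons /= size_tuple.
move: (@valid_hgt w); move: (valid w) (hgt w) (lastu w) (cnt w) (ee w) => V H L C E hv.
case: V hv => [hv|_]; case: L => /=; rewrite ?andbF ?addr0 ?add0r ?addn0.
all: repeat case: ifP => ?.
all: rewrite ?addr0 ?add0r ?mulr0 ?exprD //.
all: try (exfalso; have := hv isT; lia).
all: ring.
Qed.

Lemma G0 h l r : G 0 h l r = Arec F q 0 h l r.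
Proof.
rewrite /G big_mkcond.
rewrite (eq_bigr (fun _ => if [&& valid [::], hgt [::] == h%:Z, lastu [::] == l & (r <= cnt [::])%N]
   then q ^+ ee [::] else 0)); last by move=> t _; rewrite (tuple0 t).
rewrite sumr_const card_tuple expn0 /=.
have -> : valid [::] by rewrite /valid /= /height big_ord0.
rewrite /hgt /height /= big_ord0 /ee big_geq //.
by case: h => [|h]; case: l => //=; case: r.
Qed.

Lemma G_Arec n : forall h l r, G n h l r = Arec F q n h l r.
Proof.
elim: n => [|n IH] h l r; first exact: G0.
case: l; last by rewrite G_false !IH.
case: h => [|h]; first by rewrite G_true0.
by rewrite G_trueS !IH.
Qed.
End G.

Lemma forall_iota m (P : pred nat) : [forall i : 'I_m, P i] = all P (iota 0 m).
Proof.
apply/forallP/allP => [h x|h i].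
  by rewrite mem_iota add0n => /andP [_ lt]; exact: (h (Ordinal lt)).
by apply: h; rewrite mem_iota add0n ltn_ord.
Qed.

Lemma tnth_snd n (w : n.-tuple (bool * bool)) (i : 'I_n) :
  (tnth w i).2 = nth false (marks w) i.
Proof.
by rewrite (tnth_nth (false, false)) /marks (nth_map (false, false)) // size_tuple.
Qed.

Lemma qvar_hq i : (0 < i)%N -> qvar ^+ i != 1.
Proof.
move=> hi; rewrite /qvar -rmorphXn -tofrac1 tofrac_eq.
apply/eqP => h; have := congr1 (fun p : {poly rat} => size p) h.
by rewrite /= size_polyXn size_poly1 => -[] e; rewrite e in hi.
Qed.

Section Conv.
Variables s t : nat.
Local Notation n := (s + t)%N.
Definition unz (w : n.-tuple (bool * bool)) : n.-tuple bool * {set 'I_n} :=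
  ([tuple of map fst w], [set i : 'I_n | (tnth w i).2]).

Lemma unz_bij : bijective unz.
Proof.
exists (fun D : n.-tuple bool * {set 'I_n} => [tuple (tnth D.1 i, i \in D.2) | i < n]).
  move=> w; apply: eq_from_tnth => i.
  by rewrite tnth_mktuple /unz /= tnth_map inE; case: (tnth w i).
move=> [p S]; rewrite /unz /=; congr (_, _).
  by apply: eq_from_tnth => i; rewrite tnth_map tnth_mktuple.
by apply/setP => i; rewrite inE tnth_mktuple.
Qed.

Lemma card_unz (w : n.-tuple (bool * bool)) : #|(unz w).2| = cnt w.
Proof.
rewrite /unz /= -sum1_card /cnt -sum1_count.
rewrite (eq_bigl (fun i => (tnth w i).2)); last by move=> i; rewrite inE.
by rewrite (big_tuple _ _ w snd (fun _ => 1%N)).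
Qed.

Lemma mark_valley (w : n.-tuple (bool * bool)) i : valid w -> (i < n)%N ->
  nth false (marks w) i -> is_valley (st w) i.
Proof.
case/andP => _ /allP h hi hm.
have := h i; rewrite mem_iota add0n size_tuple hi hm /= => /(_ isT).
by case/andP.
Qed.

Lemma in_Dr_unz r (w : n.-tuple (bool * bool)) (hst : (t <= s)%N) :
  in_Dr r (unz w) = [&& valid w, hgt w == (s - t)%N%:Z & (r <= cnt w)%N].
Proof.
rewrite /in_Dr /is_ballot /= card_unz size_map size_tuple eqxx /=.
rewrite (forall_iota _ (fun i => 0 <= height (st w) i)).
have -> : [forall i in [set i0 | (tnth w i0).2], is_return (st w) i] =
          [forall i : 'I_n, nth false (marks w) i ==> is_return (st w) i].
  by apply: eq_forallb => i; rewrite inE tnth_snd.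
rewrite (forall_iota _ (fun i => nth false (marks w) i ==> is_return (st w) i)).
rewrite /valid /hgt size_tuple subzn //.
change (height [seq i.1 | i <- w] n) with (height (st w) n).
by case: (all _ _); case: (all _ _); case: (_ == _).
Qed.

Lemma vmr_unz (w : n.-tuple (bool * bool)) : valid w -> vmr (unz w) = ee w.
Proof.
move=> hv; rewrite /vmr /maj /unz /= size_map size_tuple.
have -> : (\sum_(i in [set i0 | (tnth w i0).2]) (nat_of_ord i)./2 =
   \sum_(0 <= i < n | is_valley (st w) i) (if nth false (marks w) i then i./2 else 0))%N.
  rewrite big_mkcond [RHS]big_mkcond /= big_mkord.
  apply: eq_bigr => i _; rewrite inE tnth_snd.
  case hm: (nth false (marks w) i); last by rewrite if_same.
  by rewrite (@mark_valley w i hv (ltn_ord i) hm).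
rewrite -/(st w).
have -> : (\sum_(0 <= i < n | is_valley (st w) i) i =
   ee w + \sum_(0 <= i < n | is_valley (st w) i) (if nth false (marks w) i then i./2 else 0))%N.
  rewrite /ee size_tuple -big_split /=; apply: eq_bigr => i _.
  case: ifP => _; last by rewrite addn0.
  by rewrite subnK // leq_half_double -addnn; lia.
by rewrite addnK.
Qed.

End Conv.

Theorem lemma2p1 (s t r : nat) (hst : (t < s)%N) :
  \sum_(D : (s + t).-tuple bool * {set 'I_(s + t)} | in_Dr r D) qvar ^+ vmr D
  = qvar ^+ 'C(r.+1, 2) * qbinom qvar (s + t) (s + r).
Proof.
rewrite (reindex (@unz s t)); last by apply: onW_bij; exact: unz_bij.
move: qvar_hq; move: qvar => q hq.
rewrite (eq_bigl (fun w : (s + t).-tuple (bool * bool) =>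
   [&& valid w, hgt w == (s - t)%N%:Z & (r <= cnt w)%N])); last first.
  by move=> w; rewrite in_Dr_unz // ltnW.
rewrite (eq_bigr (fun w : (s + t).-tuple (bool * bool) => q ^+ ee w)); last by move=> w /andP [hv _]; rewrite vmr_unz.
rewrite (bigID (fun w : (s + t).-tuple (bool * bool) => lastu w)).
have -> : \sum_(w : (s + t).-tuple (bool * bool) |
      [&& valid w, hgt w == (s - t)%N%:Z & (r <= cnt w)%N] && lastu w)
      q ^+ ee w = G _ q (s + t) (s - t) true r.
  apply: eq_bigl => w.
  by case: (valid w); case: (hgt w == _); case: (lastu w); case: (r <= _)%N.
have -> : \sum_(w : (s + t).-tuple (bool * bool) |
      [&& valid w, hgt w == (s - t)%N%:Z & (r <= cnt w)%N] && ~~ lastu w)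
      q ^+ ee w = G _ q (s + t) (s - t) false r.
  apply: eq_bigl => w.
  by case: (valid w); case: (hgt w == _); case: (lastu w); case: (r <= _)%N.
rewrite !G_Arec (proj1 (@Arec_closed _ q hq _ _ _)) (proj2 (@Arec_closed _ q hq _ _ _)) /WU.
rewrite [LHS]/= subrK.
rewrite (@Wc_ev _ q (s + t) (s - t) r s); last by lia.
have -> : (s - t == 0)%N = false by rewrite subn_eq0 leqNgt hst.
by rewrite addnC.
Qed.
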